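(* Let $T$ be a Boolean algebra (with order $\le$, meet $\land$, join $\lor$ and complement $\neg$), and let $(a,g)$ and $(a',g')$ be contracts over $T$. Let $\mathcal{C}_q=(a_q,g_q)$ be the quotient $(a,g)/(a',g')$, given by $$a_q=a\land(\neg a'\lor g'),\qquad g_q=(a'\land g)\lor\neg a\lor(a'\land\neg g').$$ Suppose that $a''\in T$ satisfies $a_q\le a''$, and that $g'',g'''\in T$ satisfy $a'\land g'\land g''\le a'\land g'\land g$ and $g'''\land a\le a'\land g''\land a$. Then the contract $(a'',g''')$ is a refinement of $\mathcal{C}_q$, i.e. $(a'',g''')\le\mathcal{C}_q$.
   Context: A contract over a Boolean algebra $T$ (the ''term algebra'') is a pair $(a,g)$ of elements of $T$, called assumptions and guarantees. Contracts are ordered by refinement: for contracts $\mathcal{C}=(a,g)$ and $\mathcal{C}'=(a',g')$, $\mathcal{C}\le\mathcal{C}'$ (read ''$\mathcal{C}$ is a refinement of $\mathcal{C}'$'') holds iff $a'\le a$ and $g\lor\neg a\le g'\lor\neg a'$. *)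

(* Defs.v *)
From mathcomp Require Import all_boot all_order.
Set Implicit Arguments. Unset Strict Implicit. Unset Printing Implicit Defensive.
Import Order.TTheory.
Local Open Scope order_scope.

(* A Boolean algebra is a complemented distributive lattice with top and
   bottom: MathComp's ctbDistrLatticeType. *)

(* A contract over T: pair (assumptions, guarantees). *)
Definition contract (d : Order.disp_t) (T : ctbDistrLatticeType d) := (T * T)%type.

Definition refines (d : Order.disp_t) (T : ctbDistrLatticeType d)
  (C C' : contract T) : Prop :=
  (C'.1 <= C.1) /\ (C.2 `|` ~` C.1 <= C'.2 `|` ~` C'.1).

Definition quotient (d : Order.disp_t) (T : ctbDistrLatticeType d)
  (C C' : contract T) : contract T :=
  let: (a, g) := C in let: (a', g') := C' in
  (a `&` (~` a' `|` g'), (a' `&` g) `|` ~` a `|` (a' `&` ~` g')).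

(* Main.v *)
Require Import Defs.
From mathcomp Require Import all_boot all_order.
Import Order.TTheory.
Import Order.Theory.
Local Open Scope order_scope.

Lemma shuntL (d : Order.disp_t) (T : ctbDistrLatticeType d) (x a y : T) :
  x `&` a <= y -> x <= y `|` ~` a.
Proof.
move=> h.
have -> : x = (x `&` a) `|` (x `&` ~` a) by rewrite -meetUr joinxC meetx1.
apply: leU2 => //; exact: leIr.
Qed.

Theorem theorem2 (d : Order.disp_t) (T : ctbDistrLatticeType d)
  (a g a' g' a'' g'' g''' : T) :
  (quotient (a, g) (a', g')).1 <= a'' ->
  a' `&` g' `&` g'' <= a' `&` g' `&` g ->
  g''' `&` a <= a' `&` g'' `&` a ->
  refines (a'', g''') (quotient (a, g) (a', g')).
Proof.
rewrite /refines /quotient /= => h1 h2 h3; split => //.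
apply: leU2; last by rewrite leC.
have k1 : a' `&` g'' <= a' `&` g `|` ~` g'.
  apply: shuntL; apply: le_trans (_ : a' `&` g' `&` g <= _); last first.
    by rewrite -meetA leI2 // leIr.
  by rewrite -meetA [g'' `&` g']meetC meetA; exact: h2.
have k2 : a' `&` g'' <= a' `&` g `|` a' `&` ~` g'.
  apply: (@le_trans _ _ (a' `&` (a' `&` g `|` ~` g'))).
    by rewrite lexI; apply/andP; split; [exact: leIl | exact: k1].
  by rewrite meetUr; apply: leU2 => //; exact: leIr.
have k3 : g''' <= (a' `&` g `|` a' `&` ~` g') `|` ~` a.
  apply: shuntL; apply: le_trans h3 _; apply: le_trans k2; exact: leIl.
apply: le_trans k3 _.
rewrite !leUx; apply/andP; split; first (apply/andP; split).
- by apply: lexUl; apply: lexUl.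
- by apply: lexUr.
- by apply: lexUl; apply: lexUr.
Qed.
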